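(* Let $0<s<1$. Then $\sigma_{ap}(T_{s^z})\subseteq\{s^w:\mathrm{Re}\,w=\tfrac m2,\ m=-1,0,1,2,\dots\}\cup\{0\}$.
   Context: $\mu$ is the measure on $\Omega=\{\mathrm{Re}\,z\ge-\tfrac12\}$ given by $d\mu=\sum_{n=-1}^\infty \frac{|\Gamma(\frac n2+iy+1)|^2}{2\pi(n+1)!}\,dy\,d\delta_{n/2}(x)$; $H^2(\mu)$ is the closed span of $\{a^z:0<a\le1\}$ in $L^2(\mu)$; $T_{s^z}$ is multiplication by $s^z=e^{z\ln s}$ on $H^2(\mu)$; $\sigma_{ap}$ denotes the approximate point spectrum. *)

(* Defs.v *)
From HB Require Import structures.
From mathcomp Require Import all_boot all_order all_algebra.
From mathcomp Require Import all_classical all_reals all_analysis.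
From mathcomp Require Import complex.
Set Implicit Arguments. Unset Strict Implicit. Unset Printing Implicit Defensive.
Import Order.TTheory GRing.Theory Num.Theory.
Import numFieldNormedType.Exports.
Local Open Scope classical_set_scope.
Local Open Scope ring_scope.

Section Defs.
Variable R : realType.

(* complex power a^z := e^{z ln a} for real a > 0, written out:
   e^{z ln a} = e^{complex.Re z ln a} (cos (complex.Im z ln a) + i sin (complex.Im z ln a)) *)
Definition cpow (a : R) (z : R[i]) : R[i] :=
  Complex (expR (complex.Re z * ln a) * cos (complex.Im z * ln a))
          (expR (complex.Re z * ln a) * sin (complex.Im z * ln a)).

Definition sqmod (z : R[i]) : R := complex.Re z ^+ 2 + complex.Im z ^+ 2.

(* Euler Gamma at a +iy (a > 0):  Gamma(a+iy) = int_0^oo t^(a+iy-1) e^(-t) dt *)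
Definition GammaC (a y : R) : R[i] :=
  Complex
    (Rintegral lebesgue_measure `]0%R, +oo[
       (fun t => t `^ (a - 1) * expR (- t) * cos (y * ln t)))
    (Rintegral lebesgue_measure `]0%R, +oo[
       (fun t => t `^ (a - 1) * expR (- t) * sin (y * ln t))).

(* The measure mu lives on the lines complex.Re z = n/2, n = -1,0,1,...  We index the
   line n/2 by k = n+1 : nat.  A function on supp(mu) is thus f : nat -> R -> R[i],
   f k y = f((k-1)/2 + i y). *)
Definition zpt (k : nat) (y : R) : R[i] := Complex ((k%:R - 1) / 2) y.

(* density of mu on the line k: |Gamma(n/2 + iy + 1)|^2 / (2 pi (n+1)!) *)
Definition weight (k : nat) (y : R) : R :=
  sqmod (GammaC ((k%:R + 1) / 2) y) / (2 * pi * (k`!)%:R).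

Definition fn := nat -> R -> R[i].

Definition L2norm2 (f : fn) : \bar R :=
  (\sum_(0 <= k <oo)
     \int[lebesgue_measure]_(y in [set: R]) (sqmod (f k y) * weight k y)%:E)%E.

Definition measurable_fn (f : fn) : Prop :=
  forall k, measurable_fun [set: R] (fun y => complex.Re (f k y)) /\
            measurable_fun [set: R] (fun y => complex.Im (f k y)).

Definition inL2 (f : fn) : Prop := measurable_fn f /\ (L2norm2 f < +oo)%E.

Definition powfn (a : R) : fn := fun k y => cpow a (zpt k y).

Definition comb (l : seq (R[i] * R)) : fn :=
  fun k y => \sum_(p <- l) p.1 * powfn p.2 k y.

(* H^2(mu): closure in L^2(mu) of span {a^z : 0 < a <= 1} *)
Definition H2 (f : fn) : Prop :=
  inL2 f /\
  forall e : R, 0 < e -> exists l : seq (R[i] * R),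
    all (fun p => (0 < p.2) && (p.2 <= 1)) l /\
    (L2norm2 (fun k y => (f k y - comb l k y)%R) < e%:E)%E.

Definition Tmul (s : R) (f : fn) : fn := fun k y => powfn s k y * f k y.

Definition sigma_ap (s : R) (lam : R[i]) : Prop :=
  exists fs : nat -> fn,
    (forall j, H2 (fs j) /\ L2norm2 (fs j) = 1%E) /\
    ((fun j => L2norm2 (fun k y => (Tmul s (fs j) k y - lam * fs j k y)%R))
       @ \oo --> 0%E).

End Defs.

(* Main.v *)
Require Import Defs.
From HB Require Import structures.
From mathcomp Require Import all_boot all_order all_algebra.
From mathcomp Require Import all_classical all_reals all_analysis.
From mathcomp Require Import complex.
From mathcomp Require Import ring lra.
Import Order.TTheory GRing.Theory Num.Theory.
Local Open Scope ring_scope.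
Local Open Scope classical_set_scope.
Import HBNNSimple.
Set Implicit Arguments. Unset Strict Implicit.


Local Open Scope ereal_scope.
Lemma scale_le_int (R : realType) (f g : R -> \bar R) (c : R) : (0 < c)%R ->
  (forall x, 0 <= f x) -> (forall x, c%:E * f x <= g x) ->
  c%:E * \int[lebesgue_measure]_(x in [set: R]) f x <=
  \int[lebesgue_measure]_(x in [set: R]) g x.
Proof.
move=> c0 f0 fg.
have g0 : forall x, 0 <= g x.
  by move=> x; apply: le_trans (fg x); apply: mule_ge0 => //; rewrite lee_fin ltW.
rewrite !ge0_integralTE // -ereal_sup_pZl //.
apply: ge_ereal_sup => _ [_ [h hf <-] <-].
apply: ereal_sup_ubound => /=.
exists (scale_nnsfun h (ltW c0)).
  move=> x /=; apply: le_trans (fg x).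
  rewrite EFinM; apply: lee_pmul => //; first by rewrite lee_fin ltW.
  rewrite lee_fin. exact: fun_ge0.
exact: sintegralrM.
Qed.

Local Close Scope ereal_scope.
Local Close Scope ereal_scope.

Lemma sqmod_ge0 (R : realType) (z : R[i]) : 0 <= sqmod z.
Proof. by rewrite /sqmod addr_ge0 // sqr_ge0. Qed.

Lemma sqmod_mul (R : realType) (u v : R[i]) : sqmod (u * v) = sqmod u * sqmod v.
Proof. case: u => a b; case: v => c d; rewrite /sqmod /=. ring. Qed.

Lemma weight_ge0 (R : realType) k y : 0 <= weight (R:=R) k y.
Proof.
rewrite /weight divr_ge0 ?sqmod_ge0 // mulr_ge0 // ?mulr_ge0 //.
exact: ltW (pi_gt0 _).
Qed.

Definition Ek (R : realType) (s : R) (k : nat) : R := expR ((k%:R - 1) / 2 * ln s).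
Arguments Ek {R}.

Lemma pow_sep (R : realType) (s : R) (k : nat) (y : R) (a b : R) :
  (Ek s k - Num.sqrt (a ^+ 2 + b ^+ 2)) ^+ 2 <= sqmod (powfn (R:=R) s k y - Complex a b).
Proof.
rewrite /powfn /cpow /zpt /sqmod /Ek /=.
set E := expR _; set c := cos _; set si := sin _.
have hcs : c ^+ 2 + si ^+ 2 = 1 by rewrite cos2Dsin2.
set rho := Num.sqrt _.
have hr : rho ^+ 2 = a ^+ 2 + b ^+ 2 by rewrite sqr_sqrtr // addr_ge0 // sqr_ge0.
have hr0 : 0 <= rho by exact: sqrtr_ge0.
have hE : 0 <= E by exact: expR_ge0.
have h1 : a * c + b * si <= rho.
  have : (a * c + b * si) ^+ 2 <= rho ^+ 2.
    rewrite hr -[X in _ <= X]mulr1 -hcs.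
    have -> : (a ^+ 2 + b ^+ 2) * (c ^+ 2 + si ^+ 2) = (a * c + b * si) ^+ 2 + (a * si - b * c) ^+ 2 by ring.
    by rewrite lerDl sqr_ge0.
  by nra.
nra.
Qed.

Lemma Ek_gt0 (R : realType) (s : R) k : 0 < Ek s k.
Proof. exact: expR_gt0. Qed.

Lemma Ek_mono (R : realType) (s : R) k l : 0 < s -> s < 1 -> (k <= l)%N -> Ek s l <= Ek s k.
Proof.
move=> s0 s1 kl; rewrite /Ek ler_expR.
have L0 : ln s < 0 by apply: ln_lt0; rewrite s0 s1.
have : (k%:R <= l%:R :> R) by rewrite ler_nat.
nra.
Qed.

Lemma Ek_small (R : realType) (s rho : R) : 0 < s -> s < 1 -> 0 < rho ->
  exists N, Ek s N < rho.
Proof.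
move=> s0 s1 r0.
have L0 : ln s < 0 by apply: ln_lt0; rewrite s0 s1.
set q := ln rho / ln s.
have hq : q * ln s = ln rho by rewrite /q divfK // lt_eqF.
exists (Num.truncn (1 + 2 * q)).+1.
rewrite /Ek -[X in _ < X](@lnK _ rho) ?posrE // ltr_expR.
have := truncnS_gt (1 + 2 * q).
set N := _%:R.
nra.
Qed.

Lemma sep_delta (R : realType) (s rho : R) : 0 < s -> s < 1 -> 0 < rho ->
  (forall k, Ek s k != rho) -> exists2 d, 0 < d & forall k, d <= (Ek s k - rho) ^+ 2.
Proof.
move=> s0 s1 r0 hne.
have hex : exists N, (fun k => Ek s k < rho) N by exact: Ek_small.
case: (ex_minnP hex) => K /= hK hmin.
have d1p : 0 < (rho - Ek s K) ^+ 2 by rewrite exprn_gt0 // subr_gt0.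
move: hK hmin d1p; set d1 := (rho - Ek s K) ^+ 2.
case: K @d1 => [|K] d1 hK hmin d1p.
  exists d1 => // k; rewrite /d1.
  have := Ek_mono s0 s1 (leq0n k); have := Ek_gt0 s k; nra.
pose d2 := (Ek s K - rho) ^+ 2.
have hK2 : rho < Ek s K.
  rewrite lt_neqAle eq_sym hne /=; rewrite leNgt; apply/negP => /hmin; by rewrite ltnn.
exists (Num.min d1 d2).
  by rewrite lt_min d1p /d2 exprn_gt0 // subr_gt0.
move=> k; case: (leqP K.+1 k) => hk.
  rewrite ge_min; apply/orP; left; rewrite /d1.
  have := Ek_mono s0 s1 hk; have := Ek_gt0 s k; nra.
rewrite ge_min; apply/orP; right; rewrite /d2.
have := Ek_mono s0 s1 (hk : (k <= K)%N); nra.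
Qed.

Lemma polar (R : realType) (a b : R) : 0 < Num.sqrt (a ^+ 2 + b ^+ 2) ->
  exists t, a = Num.sqrt (a ^+ 2 + b ^+ 2) * cos t /\ b = Num.sqrt (a ^+ 2 + b ^+ 2) * sin t.
Proof.
set rho := Num.sqrt _ => r0.
have hr : rho ^+ 2 = a ^+ 2 + b ^+ 2 by rewrite sqr_sqrtr // addr_ge0 // sqr_ge0.
set x := a / rho.
have hx : a = rho * x by rewrite /x mulrC divfK // gt_eqF.
have hx1 : -1 <= x <= 1.
  have : x ^+ 2 <= 1.
    rewrite /x expr_div_n ler_pdivrMr ?exprn_gt0 // mul1r hr lerDl sqr_ge0 //.
  move=> h; apply/andP; split; nra.
have hs : Num.sqrt (1 - x ^+ 2) = `|b| / rho.
  have -> : 1 - x ^+ 2 = (b / rho) ^+ 2.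
    rewrite /x !expr_div_n hr; field.
    by rewrite -hr expf_neq0 // gt_eqF.
  by rewrite sqrtr_sqr normf_div (gtr0_norm r0).
have hb : `|b| = rho * (`|b| / rho) by rewrite mulrC divfK // gt_eqF.
case: (leP 0 b) => b0.
  exists (acos x); rewrite acosK ?sin_acos // ?hs.
  by split => //; rewrite -hb ger0_norm.
exists (- acos x); rewrite cosN sinN acosK ?sin_acos // ?hs.
by split => //; rewrite mulrN -hb ltr0_norm // opprK.
Qed.

Theorem mainTheorem5 (R : realType) (s : R) (hs0 : 0 < s) (hs1 : s < 1)
  (lam : R[i]) :
  sigma_ap s lam ->
  lam = 0 \/ exists (w : R[i]) (m : nat), complex.Re w = (m%:R - 1) / 2 /\ lam = cpow s w.
Proof.
move=> [fs [Hfs Hcv]].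
case: (eqVneq lam 0) => [->|lam0]; first by left.
right.
case: lam lam0 Hcv => a b lam0 Hcv.
set rho := Num.sqrt (a ^+ 2 + b ^+ 2).
have r0 : 0 < rho.
  have hab : (a != 0) || (b != 0).
    apply: contraNT lam0; rewrite negb_or !negbK => /andP[/eqP-> /eqP->]; done.
  rewrite sqrtr_gt0 lt_def addr_ge0 ?sqr_ge0 // andbT.
  rewrite paddr_eq0 ?sqr_ge0 // !sqrf_eq0 negb_and; done.
have L0 : ln s < 0 by apply: ln_lt0; rewrite hs0 hs1.
case: (pselect (exists k, Ek s k = rho)) => [[k hk]|hno].
  have [t [ha hb]] := polar r0.
  exists (Complex ((k%:R - 1) / 2) (t / ln s)), k; split => //.
  rewrite /cpow /= divfK ?lt_eqF //.
  have -> : expR ((k%:R - 1) / 2 * ln s) = rho by [].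
  by rewrite -ha -hb.
have hne : forall k, Ek s k != rho by move=> k0; apply/eqP => h; apply: hno; exists k0.
have [d d0 hd] := sep_delta hs0 hs1 r0 hne.
have claim : forall j, (d%:E <= L2norm2 (fun k y => (Tmul s (fs j) k y - Complex a b * fs j k y)%R))%E.
  move=> j; have [_ hn1] := Hfs j.
  apply: (@le_trans _ _ (d%:E * L2norm2 (fs j))%E); first by rewrite hn1 mule1.
  rewrite /L2norm2 -nneseriesZl; last first.
    by move=> k _; apply: integral_ge0 => y _; rewrite lee_fin mulr_ge0 // ?sqmod_ge0 ?weight_ge0.
  apply: lee_nneseries.
    move=> k _ _; apply: mule_ge0; first by rewrite lee_fin ltW.
    by apply: integral_ge0 => y _; rewrite lee_fin mulr_ge0 // ?sqmod_ge0 ?weight_ge0.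
  move=> k _; apply: scale_le_int => //.
    by move=> y; rewrite lee_fin mulr_ge0 // ?sqmod_ge0 ?weight_ge0.
  move=> y; rewrite -EFinM lee_fin /Tmul -mulrBl sqmod_mul.
  have hD := le_trans (hd k) (pow_sep s k y a b).
  rewrite -mulrA; apply: ler_wpM2r => //; exact: mulr_ge0 (sqmod_ge0 _) (weight_ge0 _ _).
have : (d%:E <= 0)%E.
  apply: (cvge_to_ge Hcv); apply: nearW => j0; exact: claim.
by rewrite lee_fin leNgt d0.
Qed.
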